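(* Let $\mathcal{X}\subset\mathbb{R}^d$ be a full-dimensional polytope with vertex set $\mathcal{V}$ and let ${\bm{u}}\in\mathbb{R}^d$. Then every inclusion-wise minimal optimal spanning set of ${\bm{u}}$ has exactly $d+1$ elements, and hence is an affine basis of $\mathcal{X}$.
   Context: For ${\bm{u}}\in\mathbb{R}^d$ write ${\bm{x}}\succeq{\bm{x}}'$ if $\langle{\bm{u}},{\bm{x}}\rangle\ge\langle{\bm{u}},{\bm{x}}'\rangle$. For a finite $B\subseteq\mathcal{X}$ and ${\bm{x}}\in\mathbb{R}^d$ let $B_{\succeq{\bm{x}}}=\{{\bm{x}}'\in B:\langle{\bm{u}},{\bm{x}}'-{\bm{x}}\rangle\ge0\}$. A finite set $B\subseteq\mathcal{X}$ is an optimal spanning set of ${\bm{u}}$ if every vertex ${\bm{x}}\in\mathcal{V}$ lies in the affine hull of $B_{\succeq{\bm{x}}}$. *)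

(* Defs.v *)
From HB Require Import structures.
From mathcomp Require Import all_boot all_order all_algebra.
From mathcomp Require Import reals.
Set Implicit Arguments. Unset Strict Implicit. Unset Printing Implicit Defensive.
Import Order.TTheory GRing.Theory Num.Theory.
Local Open Scope ring_scope.

Section Defs.
Variables (R : realType) (d : nat).
Local Notation vec := 'rV[R]_d.

Definition dotv (u x : vec) : R := \sum_(i < d) u 0 i * x 0 i.

Definition conv_hull (P : seq vec) (x : vec) : Prop :=
  exists w : 'I_(size P) -> R,
    (forall i, 0 <= w i) /\ \sum_i w i = 1 /\ x = \sum_i w i *: P`_i.

Definition aff_comb (s : seq vec) (x : vec) : Prop :=
  exists w : 'I_(size s) -> R, \sum_i w i = 1 /\ x = \sum_i w i *: s`_i.

Definition affine_hull (S : vec -> Prop) (x : vec) : Prop :=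
  exists s : seq vec, (forall y, y \in s -> S y) /\ aff_comb s x.

Definition full_dimensional (S : vec -> Prop) : Prop :=
  forall x, affine_hull S x.

Definition is_vertex (S : vec -> Prop) (x : vec) : Prop :=
  S x /\ forall (y z : vec) (t : R), S y -> S z -> 0 < t < 1 ->
    x = t *: y + (1 - t) *: z -> y = x /\ z = x.

Definition B_ge (u : vec) (B : seq vec) (x : vec) : seq vec :=
  [seq y <- B | 0 <= dotv u (y - x)].

Definition optimal_spanning_set (X : vec -> Prop) (u : vec) (B : seq vec) : Prop :=
  uniq B /\ (forall y, y \in B -> X y) /\
  forall x, is_vertex X x -> aff_comb (B_ge u B x) x.

Definition minimal_optimal_spanning_set (X : vec -> Prop) (u : vec) (B : seq vec) : Prop :=
  optimal_spanning_set X u B /\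
  forall B' : seq vec, uniq B' -> {subset B' <= B} -> ~ {subset B <= B'} ->
    ~ optimal_spanning_set X u B'.

Definition aff_indep (s : seq vec) : Prop :=
  forall w : 'I_(size s) -> R, \sum_i w i = 0 -> \sum_i w i *: s`_i = 0 ->
    forall i, w i = 0.

Definition affine_basis (X : vec -> Prop) (B : seq vec) : Prop :=
  aff_indep B /\ forall x, aff_comb B x <-> affine_hull X x.

End Defs.

(* Main.v *)
Require Import Defs.
From HB Require Import structures.
From mathcomp Require Import all_boot all_order all_algebra.
From mathcomp Require Import reals.
From Stdlib Require Import Classical.
From mathcomp Require Import lra.
Set Implicit Arguments. Unset Strict Implicit. Unset Printing Implicit Defensive.
Import Order.TTheory GRing.Theory Num.Theory.
Local Open Scope ring_scope.

Definition liftv {R : realType} {d : nat} (x : 'rV[R]_d) : 'rV[R]_(d + 1) :=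
  row_mx x (const_mx 1).

Lemma sum_lift (R : realType) (d n : nat) (w : 'I_n -> R) (f : 'I_n -> 'rV[R]_d) :
  \sum_i w i *: liftv (f i) = row_mx (\sum_i w i *: f i) (const_mx (\sum_i w i)).
Proof.
apply/rowP => j; rewrite summxE !mxE.
under eq_bigr => i _ do rewrite !mxE.
case: splitP => k _; rewrite ?summxE //=.
  apply: eq_bigr => i _. rewrite [RHS]mxE. done.
by rewrite !mxE; apply: eq_bigr => i _; rewrite mulr1.
Qed.

Lemma lift_eq (R : realType) (d : nat) (a a' : 'rV[R]_d) (c c' : R) :
  row_mx a (const_mx c : 'rV_1) = row_mx a' (const_mx c') -> a = a' /\ c = c'.
Proof.
move=> /eq_row_mx [-> /rowP /(_ ord0)]; rewrite !mxE => ->; by [].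
Qed.

Lemma aff_combE (R : realType) (d : nat) (s : seq 'rV[R]_d) x :
  aff_comb s x <-> exists k : 'I_(size s) -> R, liftv x = \sum_i k i *: liftv s`_i.
Proof.
split=> [[w [w1 ->]] | [k]]; first by exists w; rewrite sum_lift w1.
rewrite sum_lift /liftv => /lift_eq [-> h]; exists k; by [].
Qed.

Lemma spanE (R : realType) (d : nat) (s : seq 'rV[R]_d) (v : 'rV[R]_(d + 1)) :
  v \in <<map liftv s>>%VS <-> exists k : 'I_(size s) -> R, v = \sum_i k i *: liftv s`_i.
Proof.
split=> [vs | [k ->]].
  have := coord_span (X := map_tuple liftv (in_tuple s)) vs.
  move=> ->; exists (fun i => coord (map_tuple liftv (in_tuple s)) i v).
  apply: eq_bigr => i _; congr (_ *: _); rewrite (nth_map 0) //.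
rewrite rpred_sum // => i _; rewrite memvZ // memv_span //.
by apply: map_f; rewrite mem_nth.
Qed.

Lemma aff_span (R : realType) (d : nat) (s : seq 'rV[R]_d) x :
  aff_comb s x <-> liftv x \in <<map liftv s>>%VS.
Proof. by rewrite aff_combE spanE. Qed.

Lemma indep_free (R : realType) (d : nat) (s : seq 'rV[R]_d) :
  aff_indep s -> free (map liftv s).
Proof.
move=> hs; have /= H := freeP (X := map_tuple liftv (in_tuple s)); apply/H => k hk i.
have : \sum_i0 k i0 *: liftv s`_i0 = 0.
  rewrite -[RHS]hk; apply: eq_bigr => j _; rewrite (nth_map 0) //.
rewrite sum_lift => h.
have [h1 h2] : \sum_i0 k i0 *: s`_i0 = 0 /\ \sum_i0 k i0 = 0.
  apply: lift_eq; rewrite h; apply/rowP=> j; rewrite !mxE.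
  by case: splitP => *; rewrite !mxE.
exact: hs.
Qed.

Lemma dotvB (R : realType) (d : nat) (u y x : 'rV[R]_d) :
  dotv u (y - x) = dotv u y - dotv u x.
Proof.
rewrite /dotv -sumrB; apply: eq_bigr => i _; by rewrite !mxE mulrBr.
Qed.

Lemma min_indep (R : realType) (d : nat) (X : 'rV[R]_d -> Prop) u B :
  minimal_optimal_spanning_set X u B -> aff_indep B.
Proof.
move=> [[uB [BX Bsp]] Bmin] w hw1 hw2 i.
apply/eqP; apply: contraT => wi.
have [i0 wi0 i0min] : exists2 i0, w i0 != 0 &
    forall j, w j != 0 -> dotv u B`_i0 <= dotv u B`_j.
  case: (@arg_minP _ _ _ i (fun j => w j != 0) (fun j => dotv u B`_j) wi) => i0 h1 h2.
  by exists i0.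
set b := B`_i0.
have bB : b \in B by rewrite mem_nth.
have hsum : \sum_j w j *: liftv B`_j = 0.
  rewrite sum_lift hw1 hw2; apply/rowP=> j; rewrite !mxE.
  by case: splitP => *; rewrite !mxE.
exfalso; apply: (Bmin (rem b B)).
- exact: rem_uniq.
- by move=> y; rewrite mem_rem_uniq // => /andP[].
- by move=> /(_ b bB); rewrite mem_rem_uniq // inE eqxx.
split; first exact: rem_uniq.
split; first by move=> y; rewrite mem_rem_uniq // => /andP[_ /BX].
move=> x /Bsp; rewrite !aff_span => hx.
apply: subvP hx; apply/span_subvP => v /mapP [y yB ->].
move: yB; rewrite mem_filter => /andP[hy yB].
have [yb | ynb] := eqVneq y b; last first.
  apply: memv_span; apply: map_f.
  by rewrite mem_filter hy mem_rem_uniq // inE ynb.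
rewrite yb.
rewrite (bigD1 i0) //= in hsum.
have -> : liftv b = (w i0)^-1 *: (- \sum_(j < size B | j != i0) w j *: liftv B`_j).
  move/eqP: hsum; rewrite addr_eq0 => /eqP <-.
  by rewrite scalerA mulVf // scale1r.
rewrite memvZ // memvN rpred_sum // => j ji0.
have [->|wj] := eqVneq (w j) 0; first by rewrite scale0r mem0v.
rewrite memvZ // memv_span // map_f // mem_filter mem_rem_uniq // inE mem_nth //.
rewrite andbT; apply/andP; split.
  rewrite dotvB (le_trans (y := dotv u b - dotv u x)) //.
    by rewrite -dotvB -yb.
  by rewrite lerD2r i0min.
apply: contra ji0 => /eqP h; apply/eqP/val_inj/eqP => /=.
by rewrite -(nth_uniq 0 (ltn_ord j) (ltn_ord i0) uB) h.
Qed.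

Lemma conv_comp (R : realType) (d : nat) (t : seq 'rV[R]_d) n (w : 'I_n -> R)
    (f : 'I_n -> 'rV[R]_d) :
  (forall j, 0 <= w j) -> \sum_j w j = 1 ->
  (forall j, w j != 0 -> conv_hull t (f j)) ->
  conv_hull t (\sum_j w j *: f j).
Proof.
move=> w0 w1 hf.
have H : forall j, exists vj : 'I_(size t) -> R, w j != 0 ->
   (forall i, 0 <= vj i) /\ \sum_i vj i = 1 /\ f j = \sum_i vj i *: t`_i.
  move=> j.
  have [wj0|wj] := eqVneq (w j) 0; first by exists (fun _ => 0); move=> /eqP.
  by have [vj hvj] := hf j wj; exists vj.
have [v hv] := fin_all_exists H.
exists (fun i => \sum_j w j * v j i); split; [|split].
- move=> i; apply: sumr_ge0 => j _.
  have [->|wj] := eqVneq (w j) 0; first by rewrite mul0r.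
  by rewrite mulr_ge0 // (hv j wj).1.
- rewrite exchange_big /= -[RHS]w1; apply: eq_bigr => j _.
  rewrite -mulr_sumr; have [->|wj] := eqVneq (w j) 0; first by rewrite mul0r.
  by rewrite (hv j wj).2.1 mulr1.
- under [RHS]eq_bigr => i _ do rewrite scaler_suml.
  rewrite exchange_big /=; apply: eq_bigr => j _.
  have [->|wj] := eqVneq (w j) 0.
    by rewrite scale0r big1 // => i _; rewrite mul0r scale0r.
  by rewrite (hv j wj).2.2 scaler_sumr; apply: eq_bigr => i _; rewrite scalerA.
Qed.

Lemma conv_mem (R : realType) (d : nat) (t : seq 'rV[R]_d) p :
  p \in t -> conv_hull t p.
Proof.
move=> pt; have hi : (index p t < size t)%N by rewrite index_mem.
pose i1 := Ordinal hi.
exists (fun i => (i == i1)%:R); split; [|split].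
- by move=> i; rewrite ler0n.
- by rewrite (bigD1 i1) //= eqxx big1 ?addr0 // => i /negPf ->.
- rewrite (bigD1 i1) //= eqxx scale1r big1 ?addr0 ?nth_index //.
  by move=> i /negPf ->; rewrite scale0r.
Qed.

Lemma conv_sub (R : realType) (d : nat) (s t : seq 'rV[R]_d) x :
  (forall y, y \in s -> conv_hull t y) -> conv_hull s x -> conv_hull t x.
Proof.
move=> hst [w [w0 [w1 ->]]]; apply: conv_comp => // j _.
by apply: hst; rewrite mem_nth.
Qed.

Lemma split_sum (R : realType) (d : nat) (P : seq 'rV[R]_d) p
    (a : 'I_(size P) -> R) :
  (forall i : 'I_(size P), P`_i != p -> a i = 0) -> \sum_i a i = 1 -> \sum_i a i *: P`_i = p.
Proof.
move=> ha a1; rewrite -[RHS]scale1r -a1 scaler_suml; apply: eq_bigr => i _.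
have [->|hi] := eqVneq P`_i p => //.
by rewrite ha // !scale0r.
Qed.

Lemma nonvertex_conv (R : realType) (d : nat) (P : seq 'rV[R]_d) p :
  p \in P -> ~ is_vertex (conv_hull P) p ->
  conv_hull [seq y <- P | y != p] p.
Proof.
move=> pP nv; apply: NNPP => nc; apply: nv; split; first exact: conv_mem.
move=> y z t [a [a0 [a1 ->]]] [b [b0 [b1 ->]]] /andP[t0 t1] hp.
pose g := fun i => t * a i + (1 - t) * b i.
have t1' : 0 < 1 - t by rewrite subr_gt0.
have g0 : forall i, 0 <= g i.
  by move=> i; rewrite addr_ge0 // mulr_ge0 // ltW.
have hpg : p = \sum_i g i *: P`_i.
  rewrite /g; under eq_bigr => i _ do rewrite scalerDl -!scalerA.
  by rewrite big_split /= -!scaler_sumr.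
have g1 : \sum_i g i = 1.
  by rewrite big_split /= -!mulr_sumr a1 b1 !mulr1 addrC subrK.
have := g1; rewrite (bigID (fun i : 'I_(size P) => P`_i == p)) /=.
set c := \sum_(i < size P | P`_i == p) g i.
set r := \sum_(i < size P | P`_i != p) g i => hcr.
have r0 : 0 <= r by apply: sumr_ge0.
have [c1|c1] := eqVneq c 1.
  have hr : r = 0 by lra.
  have hz : forall i : 'I_(size P), P`_i != p -> a i = 0 /\ b i = 0.
    move=> i hi; have := psumr_eq0P (fun i _ => g0 i) hr hi.
    rewrite /g => /eqP; rewrite paddr_eq0; last exact: mulr_ge0 (ltW t1') (b0 i); last exact: mulr_ge0 (ltW t0) (a0 i).
    move=> /andP[/eqP h1 /eqP h2]; have := a0 i; have := b0 i.
    split; nra.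
  by split; apply: split_sum => // i hi; have [] := hz i hi.
exfalso; apply: nc.
have c1' : 1 - c != 0 by rewrite subr_eq0 eq_sym.
have hr : r = 1 - c by lra.
have hS : \sum_(i < size P | P`_i != p) g i *: P`_i = (1 - c) *: p.
  have := hpg; rewrite (bigID (fun i : 'I_(size P) => P`_i == p)) /=.
  have -> : \sum_(i < size P | P`_i == p) g i *: P`_i = c *: p.
    by rewrite /c scaler_suml; apply: eq_bigr => i /eqP ->.
  set S := \sum_(i < size P | P`_i != p) g i *: P`_i.
  by move=> h; rewrite scalerBl scale1r; apply/eqP; rewrite eq_sym subr_eq addrC -h.
pose w := fun i : 'I_(size P) => if P`_i != p then g i / (1 - c) else 0.
have hpw : p = \sum_i w i *: P`_i.
  rewrite (bigID (fun i : 'I_(size P) => P`_i != p)) /= [X in _ + X]big1 ?addr0; last first.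
    by move=> i hi; rewrite /w (negbTE hi) scale0r.
  under eq_bigr => i hi do rewrite /w hi /= mulrC -scalerA.
  by rewrite -scaler_sumr hS scalerA mulVf // scale1r.
rewrite [X in conv_hull _ X]hpw; apply: conv_comp.
- move=> i; rewrite /w; case: ifP => // _.
  by rewrite divr_ge0 // -hr.
- rewrite (bigID (fun i : 'I_(size P) => P`_i != p)) /= [X in _ + X]big1 ?addr0; last first.
    by move=> i hi; rewrite /w (negbTE hi).
  under eq_bigr => i hi do rewrite /w hi /=.
  by rewrite -mulr_suml -/r hr mulfV.
- move=> i; rewrite /w; case: ifP => hi; last by move=> /eqP [].
  move=> _; apply: conv_mem; rewrite mem_filter; apply/andP; split; last exact: mem_nth.
  exact: hi.
Qed.

Lemma is_vertex_ext (R : realType) (d : nat) (X Y : 'rV[R]_d -> Prop) x :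
  (forall y, X y <-> Y y) -> is_vertex X x -> is_vertex Y x.
Proof.
move=> hXY [Xx hx]; split; first by apply/hXY.
by move=> y z t /hXY Yy /hXY Yz; apply: hx.
Qed.

Lemma vert_list (R : realType) (d : nat) n (P : seq 'rV[R]_d) :
  (size P <= n)%N -> exists Vs : seq 'rV[R]_d,
    (forall v, v \in Vs -> is_vertex (conv_hull P) v) /\
    (forall p, p \in P -> conv_hull Vs p).
Proof.
elim: n P => [|n IH] P hP.
  move: hP; rewrite leqn0 size_eq0 => /eqP ->.
  by exists [::]; split.
case: (classic (exists p, p \in P /\ ~ is_vertex (conv_hull P) p)) => [[p [pP nv]] | hall].
  set P' := [seq y <- P | y != p].
  have hsz : (size P' <= n)%N.
    rewrite size_filter -ltnS; apply: leq_trans hP.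
    rewrite -(count_predC (fun y => y != p) P) -[X in (X < _)%N]addn0 ltn_add2l.
    by rewrite -has_count; apply/hasP; exists p => //=; rewrite negbK.
  have eqc : forall x, conv_hull P x <-> conv_hull P' x.
    move=> x; split; apply: conv_sub => y yP.
      have [->|yp] := eqVneq y p; first exact: nonvertex_conv.
      by apply: conv_mem; rewrite mem_filter yp.
    by apply: conv_mem; move: yP; rewrite mem_filter => /andP[].
  have [Vs [hV hP']] := IH P' hsz.
  exists Vs; split.
    move=> v /hV; apply: is_vertex_ext => x; split; apply eqc.
  move=> q qP; have [->|qp] := eqVneq q p.
    by apply: conv_sub (nonvertex_conv pP nv) => y yP'; exact: hP'.
  by apply: hP'; rewrite mem_filter qp.
exists P; split; last by move=> p pP; exact: conv_mem.
by move=> v vP; apply: NNPP => nv; apply: hall; exists v.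
Qed.

Theorem mainTheorem11 (R : realType) (d : nat) (P : seq 'rV[R]_d)
    (u : 'rV[R]_d) (B : seq 'rV[R]_d) :
  full_dimensional (conv_hull P) ->
  minimal_optimal_spanning_set (conv_hull P) u B ->
  size B = d.+1 /\ affine_basis (conv_hull P) B.
Proof.
move=> hfull hmin; have hind := min_indep hmin.
move: hmin => [[uB [BX Bsp]] Bmin].
have [Vs [hV hPV]] := vert_list (leqnn (size P)).
have hspan : forall x, liftv x \in <<map liftv B>>%VS.
  move=> x; have [s [sX hs]] := hfull x.
  move/aff_span: hs; apply: subvP; apply/span_subvP => _ /mapP [y ys ->].
  have : conv_hull Vs y by apply: conv_sub (sX y ys) => p pP; exact: hPV.
  case=> w [_ [w1 hy]].
  have : aff_comb Vs y by exists w.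
  move/aff_span; apply: subvP; apply/span_subvP => _ /mapP [v vV ->].
  have := Bsp v (hV v vV); move/aff_span; apply: subvP; apply: sub_span.
  move=> _ /mapP [z zB ->]; apply: map_f; move: zB; rewrite mem_filter.
  by case/andP.
have hfullv : <<map liftv B>>%VS = fullv.
  apply/eqP; rewrite eqEsubv subvf /=; apply/subvP => v _.
  have -> : v = liftv (lsubmx v) + (rsubmx v 0 0 - 1) *: liftv 0.
    apply/rowP => j; rewrite !mxE; case: splitP => k hk; rewrite !mxE.
      by rewrite mulr0 addr0 (_ : j = lshift 1 k) //; apply: val_inj.
    rewrite mulr1 addrC subrK (_ : j = rshift d k); last exact: val_inj.
    by rewrite (ord1 k).
  by rewrite memvD // memvZ.
have hsize : size B = d.+1.
  have := indep_free hind; rewrite /free hfullv dimvf => /eqP.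
  by rewrite size_map dim_matrix => <-; rewrite mul1r addn1.
split => //; split => // x; split.
  by move=> hx; exists B; split.
by move=> _; apply/aff_span; rewrite hfullv memvf.
Qed.
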